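(* Let $a\le b$ be real numbers and let $u,v\in L^\infty(\mathbb{T})$ satisfy $a\le v(x)\le b$ a.e. and $\int_{\mathbb{T}}u(x)\,dx=I\in[a,b]$. Then there exists $w\in L^\infty(\mathbb{T})$ such that $a\le w(x)\le b$ a.e., $\int_{\mathbb{T}}w(x)\,dx=I$, and $$\|u-w\|_{L^1(\mathbb{T})}\le2\|u-v\|_{L^1(\mathbb{T})}.$$
   Context: $\mathbb{T}=\mathbb{R}/\mathbb{Z}$ with Lebesgue measure of total mass $1$. *)

(* Defs.v *)
(* The torus T = R/Z with its normalized Lebesgue
   measure is modelled by the fundamental domain [0,1] with Lebesgue measure
   (the endpoint identification is a null set, irrelevant for L^oo / L^1). *)
From HB Require Import structures.
From mathcomp Require Import all_boot all_order all_algebra.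
From mathcomp Require Import all_classical all_reals all_analysis.
Set Implicit Arguments. Unset Strict Implicit. Unset Printing Implicit Defensive.
Import Order.TTheory GRing.Theory Num.Theory.
Import numFieldNormedType.Exports.
Local Open Scope classical_set_scope.
Local Open Scope ring_scope.

Definition Tdom {R : realType} : set R := `[0, 1]%classic.

Definition Linfty_T {R : realType} (f : R -> R) : Prop :=
  measurable_fun Tdom f /\
  exists M : R, {ae (@lebesgue_measure R), forall x, Tdom x -> `|f x| <= M}.

Definition ae_between_T {R : realType} (a b : R) (f : R -> R) : Prop :=
  {ae (@lebesgue_measure R), forall x, Tdom x -> a <= f x <= b}.

Definition int_T {R : realType} (f : R -> R) : \bar R :=
  (\int[@lebesgue_measure R]_(x in Tdom) (f x)%:E)%E.

Definition L1dist_T {R : realType} (f g : R -> R) : \bar R :=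
  (\int[@lebesgue_measure R]_(x in Tdom) (`|f x - g x|)%:E)%E.

(* Main.v *)
Require Import Defs.
From HB Require Import structures.
From mathcomp Require Import all_boot all_order all_algebra.
From mathcomp Require Import all_classical all_reals all_analysis.
From mathcomp Require Import lra measurable_realfun.
Import Order.TTheory GRing.Theory Num.Theory.
Local Open Scope ring_scope.

Lemma mTdom (R : realType) : measurable (@Tdom R).
Proof. exact: measurable_itv. Qed.

Lemma muTdom (R : realType) : (@lebesgue_measure R) (@Tdom R) = 1%E.
Proof. by rewrite /Tdom lebesgue_measure_itv /= lte_fin ltr01 /= oppr0 adde0. Qed.

Lemma ae_mono (R : realType) (P Q : R -> Prop) : (forall x, P x -> Q x) ->
  (\forall x \ae (@lebesgue_measure R), P x) -> \forall x \ae (@lebesgue_measure R), Q x.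
Proof.
move=> h hP; exact: (@filterS _ _ (ae_filter_ringOfSetsType lebesgue_measure) _ _ h hP).
Qed.

Lemma int_bnd (R : realType) (f : R -> R) (M : R) :
  measurable_fun Tdom f ->
  {ae (@lebesgue_measure R), forall x, Tdom x -> `|f x| <= M} ->
  (@lebesgue_measure R).-integrable Tdom (EFin \o f).
Proof.
move=> mf hM; apply/integrableP; split; first exact/measurable_EFinP.
apply: (@le_lt_trans _ _ (\int[lebesgue_measure]_(x in Tdom) (cst `|M|%:E) x)%E).
  apply: ae_ge0_le_integral.
  - exact: mTdom.
  - by move=> x _; rewrite abse_ge0.
  - apply: measurableT_comp => //; exact/measurable_EFinP.
  - by move=> x _; rewrite lee_fin normr_ge0.
  - exact: measurable_cst.
  - move: hM; apply: ae_mono => x h Dx; rewrite /= lee_fin (le_trans (h Dx)) //.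
    exact: ler_norm.
rewrite integral_cst; last exact: mTdom.
by rewrite /= muTdom mule1 ltry.
Qed.

Lemma bnd_abs (R : realType) (a b y : R) : a <= y <= b -> `|y| <= `|a| + `|b|.
Proof.
move=> /andP[ay yb]; rewrite ler_norml.
have h1 := ler_norm a; have h2 := ler_norm b.
have h3 : - a <= `|a| by rewrite -normrN ler_norm.
have h4 : - b <= `|b| by rewrite -normrN ler_norm.
have h5 := normr_ge0 a; have h6 := normr_ge0 b.
apply/andP; split; lra.
Qed.

Lemma int_ab (R : realType) (f : R -> R) (a b : R) :
  measurable_fun Tdom f -> (forall x, Tdom x -> a <= f x <= b) ->
  (@lebesgue_measure R).-integrable Tdom (EFin \o f).
Proof.
move=> mf h; apply: (@int_bnd _ _ (`|a| + `|b|)) => //.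
by apply: aeW => x Dx; apply: bnd_abs; exact: h.
Qed.

Lemma clamp_aux (R : realType) (a b y z c : R) : a <= z <= b ->
  [\/ (y <= a /\ c = a), (a <= y /\ c = y) | (b <= y /\ c = b)] ->
  `|y - c| <= `|y - z|.
Proof.
move=> /andP[az zb] [[h ->]|[h ->]|[h ->]].
- rewrite !ler0_norm; lra.
- by rewrite subrr normr0 normr_ge0.
- rewrite !ger0_norm; lra.
Qed.

Lemma clamp_proj (R : realType) (a b y z : R) : a <= b -> a <= z <= b ->
  `|y - Num.max a (Num.min b y)| <= `|y - z|.
Proof.
move=> ab hz; apply: (@clamp_aux R a b y z _ hz).
rewrite /Order.min /Order.max.
case: (ltP b y) => h1 /=; [case: (ltP a b) => h2 | case: (ltP a y) => h2].
all: first [apply: Or31; split => //; lra | apply: Or32; split => //; lra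
           | apply: Or33; split => //; lra].
Qed.


Lemma mabs (R : realType) (f g : R -> R) :
  measurable_fun Tdom f -> measurable_fun Tdom g ->
  measurable_fun Tdom (fun x => (`|f x - g x|)%:E).
Proof.
move=> mf mg; apply/measurable_EFinP.
exact: (measurableT_comp (@normr_measurable R setT) (measurable_funB mf mg)).
Qed.

Lemma int_cst (R : realType) (c : R) :
  (\int[@lebesgue_measure R]_(x in Tdom) (c%:E))%E = c%:E.
Proof.
have := @integral_cst _ _ R (@lebesgue_measure R) Tdom (mTdom R) c%:E.
by rewrite /= muTdom mule1.
Qed.

Lemma tri (R : realType) (u w0 w : R -> R) :
  measurable_fun Tdom u -> measurable_fun Tdom w0 -> measurable_fun Tdom w ->
  (L1dist_T u w <= L1dist_T u w0 + L1dist_T w0 w)%E.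
Proof.
move=> mu_ mw0 mw; rewrite /L1dist_T -ge0_integralD.
- apply: ge0_le_integral.
  + exact: mTdom.
  + by move=> x _; rewrite lee_fin normr_ge0.
  + exact: mabs.
  + by apply: emeasurable_funD; exact: mabs.
  + move=> x _; rewrite -EFinD lee_fin.
    have -> : u x - w x = (u x - w0 x) + (w0 x - w x) by rewrite addrA subrK.
    exact: ler_normD.
- exact: mTdom.
- by move=> x _; rewrite lee_fin normr_ge0.
- exact: mabs.
- by move=> x _; rewrite lee_fin normr_ge0.
- exact: mabs.
Qed.


Lemma adjust (R : realType) (a b c t J : R) (w0 : R -> R) :
  measurable_fun Tdom w0 -> (forall x, a <= w0 x <= b) -> a <= c <= b ->
  0 <= t <= 1 -> int_T w0 = J%:E ->
  [/\ Linfty_T (fun x => w0 x + t * (c - w0 x)),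
      ae_between_T a b (fun x => w0 x + t * (c - w0 x)),
      int_T (fun x => w0 x + t * (c - w0 x)) = (J + t * (c - J))%:E &
      L1dist_T w0 (fun x => w0 x + t * (c - w0 x)) =
        (t%:E * L1dist_T (fun=> c) w0)%E].
Proof.
move=> mw0 hw0 /andP[ac cb] /andP[t0 t1] hJ.
have mcw : measurable_fun Tdom (fun x => c - w0 x).
  exact: (measurable_funB (measurable_cst c) mw0).
have mw : measurable_fun Tdom (fun x => w0 x + t * (c - w0 x)).
  exact: (measurable_funD mw0 (measurable_funM (measurable_cst t) mcw)).
have hw : forall x, a <= w0 x + t * (c - w0 x) <= b.
  by move=> x; have /andP[h1 h2] := hw0 x; apply/andP; split; nra.
have iw0 := @int_ab R w0 a b mw0 (fun x _ => hw0 x).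
have icw : (@lebesgue_measure R).-integrable Tdom (EFin \o (fun x => c - w0 x)).
  apply: (@int_ab R _ (c - b) (c - a) mcw) => x _.
  by have /andP[h1 h2] := hw0 x; apply/andP; split; lra.
have ic : (@lebesgue_measure R).-integrable Tdom (EFin \o (fun _ : R => c)).
  apply: (@int_ab R _ c c (measurable_cst c)) => x _.
  by rewrite lexx.
have hJ' : (\int[@lebesgue_measure R]_(x in Tdom) (w0 x)%:E)%E = J%:E := hJ.
have Icw : (\int[@lebesgue_measure R]_(x in Tdom) (c - w0 x)%:E)%E = (c - J)%:E.
  under eq_integral do rewrite EFinB.
  rewrite (integralB_EFin _ ic iw0); last exact: mTdom.
  by rewrite int_cst hJ'.
split.
- split => //; exists (`|a| + `|b|); apply: aeW => x _; exact: bnd_abs.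
- by apply: aeW => x _.
- rewrite /int_T.
  under eq_integral do rewrite EFinD EFinM.
  rewrite (integralD _ iw0); try exact: mTdom; try exact: integrableZl.
  rewrite (integralZl _ icw); last exact: mTdom.
  by rewrite Icw hJ' -EFinM -EFinD.
  by apply: (integrableZl _ t icw); exact: mTdom.
- rewrite /L1dist_T.
  rewrite (@eq_integral _ _ _ (@lebesgue_measure R) _ (fun x => t%:E * (`|c - w0 x|)%:E)%E); last first.
    move=> x _; rewrite -EFinM; congr EFin.
    by rewrite opprD addrA subrr sub0r normrN normrM (ger0_norm t0).
  apply: ge0_integralZl_EFin => //.
  + exact: mTdom.
  + exact: (@mabs R (fun=> c) w0 (measurable_cst c) mw0).
Qed.


Lemma clamp_ab (R : realType) (a b y : R) : a <= b ->
  a <= Num.max a (Num.min b y) <= b.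
Proof.
move=> ab; rewrite /Order.min /Order.max.
case: (ltP b y) => h1 /=; [case: (ltP a b) => h2 | case: (ltP a y) => h2].
all: apply/andP; split; lra.
Qed.

Lemma L1_a (R : realType) (a b J : R) (w0 : R -> R) :
  measurable_fun Tdom w0 -> (forall x, a <= w0 x <= b) -> int_T w0 = J%:E ->
  L1dist_T (fun=> a) w0 = (J - a)%:E.
Proof.
move=> mw0 hw0 hJ.
have iw0 := @int_ab R w0 a b mw0 (fun x _ => hw0 x).
have ic : (@lebesgue_measure R).-integrable Tdom (EFin \o (fun _ : R => a)).
  by apply: (@int_ab R _ a a (measurable_cst a)) => x _; rewrite lexx.
have hJ' : (\int[@lebesgue_measure R]_(x in Tdom) (w0 x)%:E)%E = J%:E := hJ.
rewrite /L1dist_T (@eq_integral _ _ _ (@lebesgue_measure R) _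
  (fun x => ((w0 x)%:E - a%:E))%E); last first.
  move=> x _; rewrite -EFinB; congr EFin.
  by rewrite distrC ger0_norm // subr_ge0; case/andP: (hw0 x).
rewrite (integralB_EFin _ iw0 ic); last exact: mTdom.
by rewrite hJ' int_cst.
Qed.

Lemma L1_b (R : realType) (a b J : R) (w0 : R -> R) :
  measurable_fun Tdom w0 -> (forall x, a <= w0 x <= b) -> int_T w0 = J%:E ->
  L1dist_T (fun=> b) w0 = (b - J)%:E.
Proof.
move=> mw0 hw0 hJ.
have iw0 := @int_ab R w0 a b mw0 (fun x _ => hw0 x).
have ic : (@lebesgue_measure R).-integrable Tdom (EFin \o (fun _ : R => b)).
  by apply: (@int_ab R _ b b (measurable_cst b)) => x _; rewrite lexx.
have hJ' : (\int[@lebesgue_measure R]_(x in Tdom) (w0 x)%:E)%E = J%:E := hJ.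
rewrite /L1dist_T (@eq_integral _ _ _ (@lebesgue_measure R) _
  (fun x => (b%:E - (w0 x)%:E))%E); last first.
  move=> x _; rewrite -EFinB; congr EFin.
  by rewrite ger0_norm // subr_ge0; case/andP: (hw0 x).
rewrite (integralB_EFin _ ic iw0); last exact: mTdom.
by rewrite hJ' int_cst.
Qed.

Theorem lemma3 (R : realType) (a b I : R) (u v : R -> R) :
  a <= b ->
  Linfty_T u -> Linfty_T v ->
  ae_between_T a b v ->
  int_T u = I%:E -> a <= I <= b ->
  exists w : R -> R,
    [/\ Linfty_T w, ae_between_T a b w, int_T w = I%:E &
        (L1dist_T u w <= 2%:E * L1dist_T u v)%E].
Proof.
move=> ab [mu_ [Mu hu]] [mv _] hv hI /andP[aI Ib].
pose w0 := (fun x => Num.max a (Num.min b (u x))).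
have mw0 : measurable_fun Tdom w0.
  exact: (measurable_maxr (measurable_cst a) (measurable_minr (measurable_cst b) mu_)).
have w0ab : forall x, a <= w0 x <= b by move=> x; exact: clamp_ab.
have iu := @int_bnd R u Mu mu_ hu.
have iw0 := @int_ab R w0 a b mw0 (fun x _ => w0ab x).
have fJ : int_T w0 \is a fin_num.
  by apply: (integrable_fin_num _ iw0); exact: mTdom.
set J := fine (int_T w0).
have hJ : int_T w0 = J%:E by rewrite /J fineK.
have hJ' : (\int[@lebesgue_measure R]_(x in Tdom) (w0 x)%:E)%E = J%:E := hJ.
have hI' : (\int[@lebesgue_measure R]_(x in Tdom) (u x)%:E)%E = I%:E := hI.
have hL1 : (L1dist_T u w0 <= L1dist_T u v)%E.
  apply: ae_ge0_le_integral.
  + exact: mTdom.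
  + by move=> x _; rewrite lee_fin normr_ge0.
  + exact: mabs.
  + by move=> x _; rewrite lee_fin normr_ge0.
  + exact: mabs.
  + move: hv; apply: ae_mono => x h Dx; rewrite lee_fin.
    exact: (@clamp_proj R a b (u x) (v x) ab (h Dx)).
have hIJ : ((`|I - J|)%:E <= L1dist_T u w0)%E.
  have e : (I - J)%:E = (\int[@lebesgue_measure R]_(x in Tdom) ((u x)%:E - (w0 x)%:E))%E.
    rewrite (integralB_EFin _ iu iw0); last exact: mTdom.
    by rewrite hI' hJ' EFinB.
  rewrite -[X in (X <= _)%E]/(abse (I - J)%:E) e.
  apply: le_trans; first apply: le_abse_integral.
  + exact: mTdom.
  + by apply: emeasurable_funB; apply/measurable_EFinP.
  + exact: lexx.
have fin2 : forall E : \bar R, (E <= L1dist_T u w0)%E ->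
    (L1dist_T u w0 + E <= 2%:E * L1dist_T u v)%E.
  move=> E hE; rewrite mule_natl mule2n; apply: leeD => //.
  exact: le_trans hE hL1.
have [IJ|JI] := leP I J.
- pose t := (J - I) / (J - a).
  have ht : t * (J - a) = J - I.
    have [Ja|Ja] := eqVneq (J - a) 0.
      rewrite Ja mulr0; move/eqP: Ja; rewrite subr_eq0 => /eqP Ja.
      by apply/eqP; rewrite eq_sym subr_eq0 eq_le IJ Ja aI.
    by rewrite /t divfK.
  have t01 : 0 <= t <= 1.
    have [Ja|Ja] := eqVneq (J - a) 0.
      by rewrite /t Ja invr0 mulr0 lexx ler01.
    have Ja' : 0 < J - a by rewrite lt_neqAle eq_sym Ja subr_ge0 (le_trans aI IJ).
    apply/andP; split.
      by rewrite /t; apply: divr_ge0; [rewrite subr_ge0 | exact: ltW].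
    by rewrite /t ler_pdivrMr // mul1r; lra.
  have aab : a <= a <= b by rewrite lexx ab.
  have [Lw Bw Iw Dw] := @adjust R a b a t J w0 mw0 w0ab aab t01 hJ.
  have mw := Lw.1.
  exists (fun x => w0 x + t * (a - w0 x)); split => //.
  + by rewrite Iw; congr EFin; nra.
  + apply: le_trans (@tri R u w0 _ mu_ mw0 mw) _.
    rewrite Dw (@L1_a R a b J w0 mw0 w0ab hJ) -EFinM ht; apply: fin2.
    by move: hIJ; rewrite distrC ger0_norm // subr_ge0.
- pose t := (I - J) / (b - J).
  have bJ : 0 < b - J by rewrite subr_gt0 (lt_le_trans JI Ib).
  have ht : t * (b - J) = I - J by rewrite /t divfK // gt_eqF.
  have t01 : 0 <= t <= 1.
    apply/andP; split.
      by rewrite /t; apply: divr_ge0; [rewrite subr_ge0 ltW | exact: ltW].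
    by rewrite /t ler_pdivrMr // mul1r; lra.
  have bab : a <= b <= b by rewrite lexx ab.
  have [Lw Bw Iw Dw] := @adjust R a b b t J w0 mw0 w0ab bab t01 hJ.
  have mw := Lw.1.
  exists (fun x => w0 x + t * (b - w0 x)); split => //.
  + by rewrite Iw; congr EFin; nra.
  + apply: le_trans (@tri R u w0 _ mu_ mw0 mw) _.
    rewrite Dw (@L1_b R a b J w0 mw0 w0ab hJ) -EFinM ht; apply: fin2.
    by move: hIJ; rewrite ger0_norm // subr_ge0 ltW.
Qed.
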